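(* Assume Schanuel's conjecture $(S)$. Then there exist transcendental positive real numbers $x,y,s,t$ with $s\neq t$ such that $x^{y}\neq y^{x}$, $s^{t}=t^{s}$, and the three numbers $x^{y}$, $y^{x}$, $s^{t}$ are integers. (For instance one may take $x\in(2,3)$ with $x^{2^{1/x}}=3$ and $y=2^{1/x}$, so that $x^y=3$, $y^x=2$, and $s<t$ positive reals with $s^t=t^s=17$.)
   Context: Schanuel's conjecture $(S)$: if $\alpha_1,\dots,\alpha_n\in\mathbb{C}$ are linearly independent over $\mathbb{Q}$, then the transcendence degree of $\mathbb{Q}(\alpha_1,\dots,\alpha_n,e^{\alpha_1},\dots,e^{\alpha_n})$ over $\mathbb{Q}$ is at least $n$. Powers of positive reals are the usual real powers. *)

(* Defs.v *)
From Stdlib Require Import Reals QArith Qreals List.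
Open Scope R_scope.

Definition C : Type := (R * R)%type.
Definition C0 : C := (0, 0).
Definition C1 : C := (1, 0).
Definition Cadd (z w : C) : C := (fst z + fst w, snd z + snd w).
Definition Cmul (z w : C) : C :=
  (fst z * fst w - snd z * snd w, fst z * snd w + snd z * fst w).
Fixpoint Cpow (z : C) (k : nat) : C :=
  match k with O => C1 | S k' => Cmul z (Cpow z k') end.
Definition Cexp (z : C) : C :=
  (exp (fst z) * cos (snd z), exp (fst z) * sin (snd z)).
Definition QtoC (q : Q) : C := (Q2R q, 0).
Definition RtoC (x : R) : C := (x, 0).

Definition Q_lin_indep (al : list C) : Prop :=
  forall qs : list Q, length qs = length al ->
    fold_right Cadd C0 (map (fun p => Cmul (QtoC (fst p)) (snd p)) (combine qs al)) = C0 ->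
    Forall (fun q => q == 0)%Q qs.

(** Multivariate polynomials over Q in variables z_0,...,z_{m-1}:
    a list of monomials (coefficient, exponent vector). *)
Definition mpoly := list (Q * list nat).

Fixpoint monom_eval (zs : list C) (e : list nat) : C :=
  match zs, e with
  | z :: zs', k :: e' => Cmul (Cpow z k) (monom_eval zs' e')
  | _, _ => C1
  end.

Definition mpoly_eval (zs : list C) (P : mpoly) : C :=
  fold_right Cadd C0 (map (fun m => Cmul (QtoC (fst m)) (monom_eval zs (snd m))) P).

Definition mpoly_nonzero (m : nat) (P : mpoly) : Prop :=
  Forall (fun mo => length (snd mo) = m) P /\
  NoDup (map snd P) /\
  Exists (fun mo => ~ (fst mo == 0)%Q) P.

Definition alg_indep (zs : list C) : Prop :=
  forall P : mpoly, mpoly_nonzero (length zs) P -> mpoly_eval zs P <> C0.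

(** trdeg_Q Q(gens) >= n, via: some n of the generators are algebraically
    independent over Q (a transcendence basis can be extracted from generators). *)
Definition trdeg_ge (gens : list C) (n : nat) : Prop :=
  exists idx : list nat,
    NoDup idx /\ length idx = n /\ Forall (fun i => (i < length gens)%nat) idx /\
    alg_indep (map (fun i => nth i gens C0) idx).

Definition Schanuel : Prop :=
  forall al : list C, Q_lin_indep al ->
    trdeg_ge (al ++ map Cexp al) (length al).

Definition Q_algebraic (x : R) : Prop :=
  exists cs : list Q, Exists (fun q => ~ (q == 0)%Q) cs /\
    fold_right Rplus 0 (map (fun p => Q2R (fst p) * x ^ snd p)
                          (combine cs (seq 0 (length cs)))) = 0.
Definition transcendental (x : R) : Prop := ~ Q_algebraic x.

(* Main.v *)
Require Import Defs.
From Stdlib Require Import Reals QArith Qreals List ZArith.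
From Stdlib Require Import Lra Lia Classical.
Open Scope R_scope.


Fixpoint rmonom (zs : list R) (e : list nat) : R :=
  match zs, e with
  | z :: zs', k :: e' => z ^ k * rmonom zs' e'
  | _, _ => 1
  end.

Definition reval (zs : list R) (P : mpoly) : R :=
  fold_right Rplus 0 (map (fun m => Q2R (fst m) * rmonom zs (snd m)) P).

Lemma Cmul_R a b : Cmul (RtoC a) (RtoC b) = RtoC (a * b).
Proof. unfold Cmul, RtoC; simpl; f_equal; ring. Qed.
Lemma Cadd_R a b : Cadd (RtoC a) (RtoC b) = RtoC (a + b).
Proof. unfold Cadd, RtoC; simpl; f_equal; ring. Qed.
Lemma Cpow_R a k : Cpow (RtoC a) k = RtoC (a ^ k).
Proof. induction k; simpl. reflexivity. rewrite IHk, Cmul_R. reflexivity. Qed.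

Lemma monom_R zs e : monom_eval (map RtoC zs) e = RtoC (rmonom zs e).
Proof.
  revert e; induction zs as [|z zs IH]; intros [|k e]; simpl; try reflexivity.
  rewrite IH, Cpow_R, Cmul_R. reflexivity.
Qed.

Lemma mpoly_eval_R zs P : mpoly_eval (map RtoC zs) P = RtoC (reval zs P).
Proof.
  unfold mpoly_eval, reval. induction P as [|m P IH]; simpl. reflexivity.
  rewrite IH, monom_R. unfold QtoC. fold (RtoC (Q2R (fst m))).
  rewrite Cmul_R, Cadd_R. reflexivity.
Qed.

Lemma reval_app zs P1 P2 : reval zs (P1 ++ P2) = reval zs P1 + reval zs P2.
Proof. unfold reval. rewrite map_app, fold_right_app.
  induction P1; simpl. ring. unfold reval in IHP1. rewrite IHP1. ring. Qed.

Fixpoint ins (mo : Q * list nat) (l : mpoly) : mpoly :=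
  match l with
  | nil => mo :: nil
  | mo' :: l' => if list_eq_dec Nat.eq_dec (snd mo) (snd mo')
                 then (Qplus (fst mo) (fst mo'), snd mo') :: l'
                 else mo' :: ins mo l'
  end.
Definition norm (P : mpoly) : mpoly := fold_right ins nil P.

Lemma reval_ins zs mo l : reval zs (ins mo l) = Q2R (fst mo) * rmonom zs (snd mo) + reval zs l.
Proof.
  induction l as [|mo' l IH]; simpl. unfold reval; simpl; ring.
  destruct (list_eq_dec Nat.eq_dec (snd mo) (snd mo')) as [E|E].
  - unfold reval; simpl. rewrite Q2R_plus, E. ring.
  - unfold reval in *; simpl. rewrite IH. ring.
Qed.

Lemma reval_norm zs P : reval zs (norm P) = reval zs P.
Proof. induction P; simpl. reflexivity. rewrite reval_ins, IHP. unfold reval; simpl; ring. Qed.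

Lemma ins_len n mo l : Forall (fun m => length (snd m) = n) l -> length (snd mo) = n ->
  Forall (fun m => length (snd m) = n) (ins mo l).
Proof.
  induction l as [|mo' l IH]; intros H1 H2; simpl. constructor; auto.
  inversion H1; subst. destruct (list_eq_dec Nat.eq_dec (snd mo) (snd mo')).
  constructor; auto. constructor; auto.
Qed.

Lemma ins_in mo l e : In e (map snd (ins mo l)) -> e = snd mo \/ In e (map snd l).
Proof.
  induction l as [|mo' l IH]; simpl. intuition.
  destruct (list_eq_dec Nat.eq_dec (snd mo) (snd mo')); simpl; intuition.
Qed.

Lemma ins_nodup mo l : NoDup (map snd l) -> NoDup (map snd (ins mo l)).
Proof.
  induction l as [|mo' l IH]; intros H; simpl. constructor; [simpl; tauto| constructor].
  simpl in H; inversion H; subst.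
  destruct (list_eq_dec Nat.eq_dec (snd mo) (snd mo')); simpl. constructor; auto.
  constructor; auto. intro Hi. apply ins_in in Hi. destruct Hi; auto.
Qed.

Lemma norm_nodup P : NoDup (map snd (norm P)).
Proof. induction P; simpl. constructor. apply ins_nodup; auto. Qed.

Lemma KEY (rs : list R) (P : mpoly) :
  alg_indep (map RtoC rs) ->
  Forall (fun m => length (snd m) = length rs) P ->
  (exists ws, reval ws P <> 0) ->
  reval rs P <> 0.
Proof.
  intros HA HL [ws Hws] H0.
  assert (HN : mpoly_nonzero (length (map RtoC rs)) (norm P)).
  { rewrite length_map. split; [|split].
    - clear Hws H0. induction P; simpl. constructor. inversion HL; subst. apply ins_len; auto.
    - apply norm_nodup.
    - apply NNPP. intro HE. apply Hws. rewrite <- reval_norm.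
      generalize (norm P) HE. clear. intros l HE. induction l as [|m l IH]. reflexivity.
      unfold reval; simpl. fold (reval ws l). rewrite IH.
      assert (fst m == 0)%Q. { destruct (Qeq_dec (fst m) 0); auto. exfalso; apply HE; constructor; auto. }
      rewrite (Qeq_eqR _ _ H). unfold Q2R at 1; simpl. field.
      intro; apply HE; constructor 2; auto. }
  apply (HA _ HN). rewrite mpoly_eval_R, reval_norm, H0. reflexivity.
Qed.

Fixpoint unitv (m i : nat) : list nat :=
  match m, i with
  | O, _ => nil
  | S m', O => 1%nat :: repeat 0%nat m'
  | S m', S i' => 0%nat :: unitv m' i'
  end.

Fixpoint vadd (e1 e2 : list nat) : list nat :=
  match e1, e2 with
  | a :: e1', b :: e2' => (a + b)%nat :: vadd e1' e2'
  | _, _ => nil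
  end.

Definition pconst (m : nat) (q : Q) : mpoly := (q, repeat 0%nat m) :: nil.
Definition pvar (m i : nat) : mpoly := (1%Q, unitv m i) :: nil.
Definition pmul (P1 P2 : mpoly) : mpoly :=
  flat_map (fun a => map (fun b => (Qmult (fst a) (fst b), vadd (snd a) (snd b))) P2) P1.

Lemma rmonom_zero zs m : rmonom zs (repeat 0%nat m) = 1.
Proof. revert m; induction zs; intros [|m]; simpl; auto. rewrite IHzs. ring. Qed.

Lemma rmonom_unit zs i : (i < length zs)%nat -> rmonom zs (unitv (length zs) i) = nth i zs 0.
Proof.
  revert i; induction zs as [|z zs IH]; intros [|i] Hi; simpl in *; try lia.
  rewrite rmonom_zero. ring. rewrite IH by lia. ring.
Qed.

Lemma rmonom_vadd zs e1 e2 : length e1 = length zs -> length e2 = length zs ->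
  rmonom zs (vadd e1 e2) = rmonom zs e1 * rmonom zs e2.
Proof.
  revert e1 e2; induction zs as [|z zs IH]; intros [|a e1] [|b e2] H1 H2; simpl in *; try lia; try ring.
  rewrite IH by lia. rewrite pow_add. ring.
Qed.

Lemma vadd_len e1 e2 n : length e1 = n -> length e2 = n -> length (vadd e1 e2) = n.
Proof. revert e2 n; induction e1; intros [|b e2] n H1 H2; simpl in *; try lia.
  destruct n; [lia|]. f_equal. apply IHe1; lia. Qed.

Definition LenOK n (P : mpoly) := Forall (fun m => length (snd m) = n) P.

Lemma reval_pmul zs P1 P2 : LenOK (length zs) P1 -> LenOK (length zs) P2 ->
  reval zs (pmul P1 P2) = reval zs P1 * reval zs P2.
Proof.
  intros H1 H2. induction P1 as [|a P1 IH]; simpl. unfold reval; simpl; ring.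
  inversion H1; subst. rewrite reval_app, IH by auto.
  assert (reval zs (map (fun b => (Qmult (fst a) (fst b), vadd (snd a) (snd b))) P2)
          = Q2R (fst a) * rmonom zs (snd a) * reval zs P2).
  { clear IH H1. induction P2 as [|b P2 IH2]; simpl. unfold reval; simpl; ring.
    inversion H2; subst. unfold reval in *; simpl. rewrite IH2 by auto.
    rewrite Q2R_mult, rmonom_vadd by auto. ring. }
  rewrite H. unfold reval; simpl. ring.
Qed.

Lemma len_pmul n P1 P2 : LenOK n P1 -> LenOK n P2 -> LenOK n (pmul P1 P2).
Proof.
  intros H1 H2. induction P1 as [|a P1 IH]; simpl. constructor.
  inversion H1; subst. apply Forall_app; split; auto.
  apply Forall_map. eapply Forall_impl; [|exact H2]. intros b Hb; simpl. apply vadd_len; auto.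
  apply IH; auto.
Qed.

Inductive ex :=
| V (g : nat) | K (q : Q) | Pl (a b : ex) | Ml (a b : ex) | Pw (a : ex) (n : nat).

Fixpoint eeval (f : nat -> R) (E : ex) : R :=
  match E with
  | V g => f g | K q => Q2R q | Pl a b => eeval f a + eeval f b
  | Ml a b => eeval f a * eeval f b | Pw a n => eeval f a ^ n
  end.

Fixpoint evars (E : ex) : list nat :=
  match E with
  | V g => g :: nil | K _ => nil | Pl a b => evars a ++ evars b
  | Ml a b => evars a ++ evars b | Pw a _ => evars a
  end.

Fixpoint index (g : nat) (l : list nat) : nat :=
  match l with nil => O | h :: t => if Nat.eqb g h then O else S (index g t) end.

Lemma index_spec g l : In g l -> (index g l < length l)%nat /\ nth (index g l) l 0%nat = g.
Proof.
  induction l as [|h t IH]; simpl; intros H. contradiction.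
  destruct (Nat.eqb g h) eqn:E. apply Nat.eqb_eq in E; subst; split; auto; lia.
  destruct H as [H|H]. subst; rewrite Nat.eqb_refl in E; discriminate.
  destruct (IH H); split; auto; lia.
Qed.

Fixpoint ppow (P : mpoly) (m n : nat) : mpoly :=
  match n with O => pconst m 1 | S n' => pmul P (ppow P m n') end.

Fixpoint compile (m : nat) (idx : list nat) (E : ex) : mpoly :=
  match E with
  | V g => pvar m (index g idx)
  | K q => pconst m q
  | Pl a b => compile m idx a ++ compile m idx b
  | Ml a b => pmul (compile m idx a) (compile m idx b)
  | Pw a n => ppow (compile m idx a) m n
  end.

Lemma unitv_len m i : (i < m)%nat -> length (unitv m i) = m.
Proof. revert i; induction m; intros [|i] H; simpl; try lia. rewrite repeat_length; auto.
  f_equal; apply IHm; lia. Qed.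

Lemma len_compile idx E : (forall g, In g (evars E) -> In g idx) ->
  LenOK (length idx) (compile (length idx) idx E).
Proof.
  induction E; simpl; intros H.
  - constructor; [|constructor]. simpl. apply unitv_len. apply index_spec. auto.
  - constructor; [|constructor]. simpl. apply repeat_length.
  - apply Forall_app; split; [apply IHE1|apply IHE2]; intros; apply H; apply in_or_app; auto.
  - apply len_pmul; [apply IHE1|apply IHE2]; intros; apply H; apply in_or_app; auto.
  - induction n; simpl. constructor; [|constructor]. simpl. apply repeat_length.
    apply len_pmul; auto.
Qed.

Lemma reval_compile (f : nat -> R) idx E : (forall g, In g (evars E) -> In g idx) ->
  reval (map f idx) (compile (length idx) idx E) = eeval f E.
Proof.
  assert (HL : length (map f idx) = length idx) by apply length_map.
  induction E; simpl; intros H.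
  - unfold pvar, reval; simpl. rewrite <- HL. rewrite rmonom_unit.
    destruct (index_spec g idx) as [H1 H2]; auto.
    rewrite nth_indep with (d' := f 0%nat) by (rewrite HL; auto).
    rewrite map_nth, H2. unfold Q2R; simpl. field.
    rewrite HL. apply index_spec; auto.
  - unfold pconst, reval; simpl. rewrite rmonom_zero. ring.
  - rewrite reval_app, IHE1, IHE2; auto; intros; apply H; apply in_or_app; auto.
  - rewrite reval_pmul, IHE1, IHE2; auto; try (intros; apply H; apply in_or_app; auto);
    rewrite HL; apply len_compile; intros; apply H; apply in_or_app; auto.
  - induction n; simpl. unfold pconst, reval; simpl. rewrite rmonom_zero. unfold Q2R; simpl; field.
    rewrite reval_pmul, IHE, IHn; auto; rewrite HL.
    apply len_compile; auto.
    clear IHn. induction n; simpl. constructor; [|constructor]. simpl. apply repeat_length.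
    apply len_pmul; auto. apply len_compile; auto.
Qed.

Lemma rel_false (gens : list R) (idx : list nat) (E : ex) (f : nat -> R) :
  alg_indep (map (fun i => nth i (map RtoC gens) C0) idx) ->
  (forall g, In g (evars E) -> In g idx) ->
  eeval f E <> 0 ->
  eeval (fun g => nth g gens 0) E = 0 -> False.
Proof.
  intros HA HV Hw H0.
  assert (Hm : map (fun i => nth i (map RtoC gens) C0) idx = map RtoC (map (fun i => nth i gens 0) idx)).
  { rewrite map_map. apply map_ext. intro i. change C0 with (RtoC 0). apply map_nth. }
  rewrite Hm in HA.
  apply (KEY _ (compile (length idx) idx E) HA).
  - rewrite length_map. apply len_compile; auto.
  - exists (map f idx). rewrite reval_compile; auto.
  - rewrite reval_compile; auto.
Qed.

Lemma fold_combine_R (qs : list Q) (l : list R) :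
  fold_right Cadd C0 (map (fun p => Cmul (QtoC (fst p)) (snd p)) (combine qs (map RtoC l)))
  = RtoC (fold_right Rplus 0 (map (fun p => Q2R (fst p) * snd p) (combine qs l))).
Proof.
  revert l; induction qs as [|q qs IH]; intros [|x l]; simpl; try reflexivity.
  rewrite IH. unfold QtoC. fold (RtoC (Q2R q)). rewrite Cmul_R, Cadd_R. reflexivity.
Qed.

Lemma Cexp_R x : Cexp (RtoC x) = RtoC (exp x).
Proof. unfold Cexp, RtoC; simpl. rewrite cos_0, sin_0. f_equal; ring. Qed.

Lemma schanuel_real (l : list R) : Schanuel ->
  (forall qs, length qs = length l ->
     fold_right Rplus 0 (map (fun p => Q2R (fst p) * snd p) (combine qs l)) = 0 ->
     Forall (fun q => q == 0)%Q qs) ->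
  exists idx, NoDup idx /\ length idx = length l /\
    Forall (fun i => (i < 2 * length l)%nat) idx /\
    alg_indep (map (fun i => nth i (map RtoC (l ++ map exp l)) C0) idx).
Proof.
  intros HS HI.
  assert (HQ : Q_lin_indep (map RtoC l)).
  { intros qs Hl Hs. apply HI. rewrite Hl, length_map; auto.
    rewrite fold_combine_R in Hs. injection Hs; auto. }
  destruct (HS _ HQ) as [idx [H1 [H2 [H3 H4]]]].
  exists idx. rewrite length_map in H2. split; auto. split; auto.
  assert (Hg : map RtoC l ++ map Cexp (map RtoC l) = map RtoC (l ++ map exp l)).
  { rewrite map_app, map_map, map_map. f_equal. apply map_ext. apply Cexp_R. }
  rewrite Hg in H3, H4. rewrite length_map, length_app, length_map in H3.
  split; auto. eapply Forall_impl; [|exact H3]. simpl. intros; lia.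
Qed.

Definition indep2 (X G : R) := forall u v : Q, Q2R u * X + Q2R v * G = 0 -> (u == 0 /\ v == 0)%Q.
Definition indep3 (X Y G : R) := forall u v w : Q,
  Q2R u * X + Q2R v * Y + Q2R w * G = 0 -> (u == 0 /\ v == 0 /\ w == 0)%Q.

Fixpoint horner (cs : list Q) (z : R) : R :=
  match cs with nil => 0 | c :: cs' => Q2R c + z * horner cs' z end.
Definition algc (z : R) := exists c0 cs, ~ (c0 == 0)%Q /\ horner (c0 :: cs) z = 0.

Fixpoint hex (cs : list Q) (N D : ex) : ex :=
  match cs with nil => K 0 | c :: cs' => Pl (Ml (K c) (Pw D (length cs'))) (Ml N (hex cs' N D)) end.

Lemma hex_val f cs N D z : eeval f N = z * eeval f D ->
  eeval f D * eeval f (hex cs N D) = eeval f D ^ length cs * horner cs z.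
Proof.
  intros H. induction cs as [|c cs IH]; simpl. unfold Q2R; simpl; field.
  replace (eeval f D * (Q2R c * eeval f D ^ length cs + eeval f N * eeval f (hex cs N D)))
    with (Q2R c * eeval f D ^ S (length cs) + eeval f N * (eeval f D * eeval f (hex cs N D))) by (simpl; ring).
  rewrite IH, H. simpl. ring.
Qed.

Lemma hex_zero f cs N D z : eeval f N = z * eeval f D -> eeval f D <> 0 -> horner cs z = 0 ->
  eeval f (hex cs N D) = 0.
Proof.
  intros H1 H2 H3. apply (Rmult_eq_reg_l (eeval f D)); auto.
  rewrite (hex_val f cs N D z H1), H3. ring.
Qed.

Lemma hex_wit f c0 cs N D : eeval f N = 0 -> eeval f D <> 0 -> ~ (c0 == 0)%Q ->
  eeval f (hex (c0 :: cs) N D) <> 0.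
Proof.
  intros H1 H2 H3. simpl. rewrite H1, Rmult_0_l, Rplus_0_r.
  apply Rmult_integral_contrapositive; split. intro E. apply H3. apply eqR_Qeq. rewrite E. unfold Q2R; simpl; field.
  apply pow_nonzero; auto.
Qed.

Lemma hex_vars cs N D g : In g (evars (hex cs N D)) -> In g (evars N) \/ In g (evars D).
Proof.
  induction cs; simpl. tauto.
  intros H. repeat (apply in_app_or in H; destruct H as [H|H]); simpl in H; try tauto.
Qed.

Lemma Q2R_IZ c : Q2R (inject_Z c) = IZR c.
Proof. unfold Q2R, inject_Z; simpl. field. Qed.

Lemma S2 (X G : R) (c : Z) (E : ex) (f : nat -> R) : Schanuel -> indep2 X G ->
  algc (exp X) -> exp G = IZR c -> IZR c <> 0 ->
  (forall g, In g (evars E) -> g = 0%nat \/ g = 1%nat) -> eeval f E <> 0 ->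
  eeval (fun g => nth g (X :: G :: exp X :: exp G :: nil) 0) E = 0 -> False.
Proof.
  intros HS HI [c0 [cs [Hc0 Hh]]] Hc Hc' HE Hw H0.
  destruct (schanuel_real (X :: G :: nil) HS) as [idx [Hnd [Hl [Hlt HA]]]].
  { intros qs Hq Hs. destruct qs as [|u [|v [|]]]; simpl in Hq; try lia.
    simpl in Hs. destruct (HI u v) as [A B]. lra. repeat constructor; auto. }
  simpl in Hl, Hlt.
  destruct (In_dec Nat.eq_dec 2%nat idx) as [I2|I2].
  { apply (rel_false _ idx (hex (c0 :: cs) (V 2) (K 1)) (fun _ => 0) HA).
    - intros g Hg. apply hex_vars in Hg. simpl in Hg. destruct Hg as [[H|H]|H]; subst; tauto.
    - apply hex_wit; auto. simpl. unfold Q2R; simpl; lra.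
    - apply (hex_zero _ _ _ _ (exp X)); auto; simpl; unfold Q2R; simpl; lra. }
  destruct (In_dec Nat.eq_dec 3%nat idx) as [I3|I3].
  { apply (rel_false _ idx (Pl (V 3) (K (- inject_Z c))) (fun _ => 0) HA).
    - intros g Hg. simpl in Hg. destruct Hg as [H|H]; subst; tauto.
    - simpl. rewrite Q2R_opp, Q2R_IZ. lra.
    - simpl. rewrite Q2R_opp, Q2R_IZ, Hc. lra. }
  apply (rel_false _ idx E f HA); auto.
  intros g Hg. apply HE in Hg.
  destruct idx as [|a [|b [|]]]; simpl in Hl; try lia.
  assert (Ha : (a < 4)%nat) by (inversion Hlt; auto).
  assert (Hb : (b < 4)%nat) by (inversion Hlt; subst; match goal with H: Forall _ (b::nil) |- _ => inversion H; auto end).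
  assert (Hab : a <> b) by (intro; subst; inversion Hnd; subst; simpl in *; tauto).
  simpl in *. lia.
Qed.

Lemma Q2R_0 : Q2R 0 = 0. Proof. unfold Q2R; simpl; field. Qed.
Lemma Q2R_1 : Q2R 1 = 1. Proof. unfold Q2R; simpl; field. Qed.
Lemma Q2R_nz q : ~ (q == 0)%Q -> Q2R q <> 0.
Proof. intros H E. apply H. apply eqR_Qeq. rewrite E, Q2R_0. auto. Qed.

Lemma S3 (P Qq G : R) (c : Z) (k m : Q) : Schanuel -> indep3 P Qq G ->
  algc (exp P) -> exp G = IZR c -> IZR c <> 0 ->
  exp Qq * P = Q2R k * G -> exp P * Qq = Q2R m * G -> Qq <> 0 -> ~ (k == 0)%Q -> False.
Proof.
  intros HS HI [c0 [cs [Hc0 Hh]]] Hc Hc' R1 R2 HQ Hk.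
  destruct (schanuel_real (P :: Qq :: G :: nil) HS) as [idx [Hnd [Hl [Hlt HA]]]].
  { intros qs Hq Hs. destruct qs as [|u [|v [|w [|]]]]; simpl in Hq; try lia.
    simpl in Hs. destruct (HI u v w) as [A [B C]]. lra. repeat constructor; auto. }
  simpl in Hl, Hlt.
  pose proof (Q2R_nz _ Hk) as Hk'.
  destruct (In_dec Nat.eq_dec 3%nat idx) as [I3|I3].
  { apply (rel_false _ idx (hex (c0 :: cs) (V 3) (K 1)) (fun _ => 0) HA).
    - intros g Hg. apply hex_vars in Hg. simpl in Hg. destruct Hg as [[H|H]|H]; subst; tauto.
    - apply hex_wit; auto. simpl. rewrite Q2R_1; lra.
    - apply (hex_zero _ _ _ _ (exp P)); auto; simpl; rewrite Q2R_1; lra. }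
  destruct (In_dec Nat.eq_dec 5%nat idx) as [I5|I5].
  { apply (rel_false _ idx (Pl (V 5) (K (- inject_Z c))) (fun _ => 0) HA).
    - intros g Hg. simpl in Hg. destruct Hg as [H|H]; subst; tauto.
    - simpl. rewrite Q2R_opp, Q2R_IZ. lra.
    - simpl. rewrite Q2R_opp, Q2R_IZ, Hc. lra. }
  destruct (In_dec Nat.eq_dec 1%nat idx) as [I1|I1];
  [destruct (In_dec Nat.eq_dec 2%nat idx) as [I2|I2]|].
  { apply (rel_false _ idx (hex (c0 :: cs) (Ml (K m) (V 2)) (V 1))
       (fun g => if Nat.eqb g 1 then 1 else 0) HA).
    - intros g Hg. apply hex_vars in Hg. simpl in Hg. intuition; subst; auto.
    - apply hex_wit; auto. simpl. ring. simpl. lra.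
    - apply (hex_zero _ _ _ _ (exp P)); auto; simpl; lra. }
  all: destruct idx as [|a [|b [|d [|]]]]; simpl in Hl; try lia.
  all: rewrite Forall_forall in Hlt.
  all: assert (Ha : (a < 6)%nat) by (apply Hlt; simpl; auto).
  all: assert (Hb : (b < 6)%nat) by (apply Hlt; simpl; auto).
  all: assert (Hd : (d < 6)%nat) by (apply Hlt; simpl; auto).
  all: apply NoDup_cons_iff in Hnd; destruct Hnd as [Hn1 Hnd];
       apply NoDup_cons_iff in Hnd; destruct Hnd as [Hn2 _]; simpl in Hn1, Hn2.
  all: destruct (In_dec Nat.eq_dec 0%nat (a :: b :: d :: nil)) as [J0|J0];
       destruct (In_dec Nat.eq_dec 2%nat (a :: b :: d :: nil)) as [J2|J2];
       destruct (In_dec Nat.eq_dec 4%nat (a :: b :: d :: nil)) as [J4|J4];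
       try (exfalso; simpl in *; lia).
  all: try (apply (rel_false _ _ (Pl (Ml (V 4) (V 0)) (Ml (K (- k)) (V 2)))
       (fun g => if Nat.eqb g 2 then 1 else 0) HA);
    [ intros g Hg; simpl in Hg; decompose [or] Hg; subst; auto; contradiction
    | simpl; rewrite Q2R_opp; intro; apply Hk'; lra
    | simpl; rewrite Q2R_opp; lra ]).
  all: apply (rel_false _ _ (hex (c0 :: cs) (Ml (Ml (K m) (V 4)) (V 0)) (Ml (K k) (V 1)))
       (fun g => if Nat.eqb g 1 then 1 else 0) HA);
    [ intros g Hg; apply hex_vars in Hg; simpl in Hg; decompose [or] Hg; subst; auto; contradiction
    | apply hex_wit; auto; simpl; [ring | lra]
    | apply (hex_zero _ _ _ _ (exp P)); auto; simpl; [|apply Rmult_integral_contrapositive; auto];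
      replace (Q2R m * exp Qq * P) with (Q2R m * (exp Qq * P)) by ring; rewrite R1;
      replace (exp P * (Q2R k * Qq)) with (Q2R k * (exp P * Qq)) by ring; rewrite R2; ring ].
Qed.

Lemma fold_seq cs z k : fold_right Rplus 0 (map (fun p => Q2R (fst p) * z ^ snd p)
   (combine cs (seq k (length cs)))) = z ^ k * horner cs z.
Proof.
  revert k; induction cs as [|c cs IH]; intros k; simpl. ring.
  rewrite IH. simpl. ring.
Qed.

Lemma strip cs z : Exists (fun q => ~ (q == 0)%Q) cs -> horner cs z = 0 -> z <> 0 -> algc z.
Proof.
  induction cs as [|c cs IH]; intros HE Hh Hz. inversion HE.
  destruct (Qeq_dec c 0) as [E|E].
  - apply IH; auto. inversion HE; subst; auto. contradiction.
    simpl in Hh. rewrite (Qeq_eqR _ _ E), Q2R_0 in Hh.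
    apply (Rmult_eq_reg_l z); auto. lra.
  - exists c, cs. auto.
Qed.

Lemma L0 z : Q_algebraic z -> z <> 0 -> algc z.
Proof.
  intros [cs [HE Hs]] Hz. apply (strip cs); auto.
  rewrite fold_seq in Hs. simpl in Hs. lra.
Qed.

Lemma alg_rat w : ~ (w == 0)%Q -> algc (Q2R w).
Proof.
  intros Hw. exists (- w)%Q, (1%Q :: nil). split.
  intro H. apply Hw. rewrite <- (Qopp_involutive w), H. reflexivity.
  simpl. rewrite Q2R_opp, Q2R_1. ring.
Qed.

Lemma dep2_rat X G r kq : ~ indep2 X G -> r * X = Q2R kq * G -> G <> 0 -> ~ (kq == 0)%Q ->
  exists w, r = Q2R w.
Proof.
  intros HN HR HG Hk. unfold indep2 in HN.
  apply not_all_ex_not in HN; destruct HN as [s1 HN].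
  apply not_all_ex_not in HN; destruct HN as [s2 HN].
  apply imply_to_and in HN; destruct HN as [H1 H2].
  pose proof (Q2R_nz _ Hk) as Hk'.
  assert (E : Q2R s1 * Q2R kq + Q2R s2 * r = 0).
  { apply (Rmult_eq_reg_r G); auto. rewrite Rmult_0_l.
    replace ((Q2R s1 * Q2R kq + Q2R s2 * r) * G) with (Q2R s1 * (Q2R kq * G) + Q2R s2 * r * G) by ring.
    rewrite <- HR. replace (Q2R s1 * (r * X) + Q2R s2 * r * G) with (r * (Q2R s1 * X + Q2R s2 * G)) by ring.
    rewrite H1. ring. }
  destruct (Qeq_dec s2 0) as [Z2|Z2].
  - exfalso. apply H2. split; auto. rewrite (Qeq_eqR _ _ Z2), Q2R_0 in E.
    apply eqR_Qeq. rewrite Q2R_0. apply (Rmult_eq_reg_r (Q2R kq)); auto. lra.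
  - exists (- (s1 * kq) / s2)%Q. rewrite Q2R_div by auto. rewrite Q2R_opp, Q2R_mult.
    pose proof (Q2R_nz _ Z2). field_simplify_eq; auto. lra.
Qed.


Lemma horner_xn j z : horner (repeat 0%Q j ++ 1%Q :: nil) z = z ^ j.
Proof. induction j; simpl. rewrite Q2R_1. ring. rewrite IHj, Q2R_0. ring. Qed.

Lemma alg_pow z (n : nat) (C : Z) : (0 < n)%nat -> z ^ n = IZR C -> IZR C <> 0 -> algc z.
Proof.
  intros Hn Hz HC. exists (- inject_Z C)%Q, (repeat 0%Q (n - 1) ++ 1%Q :: nil). split.
  - intro H. apply HC. rewrite <- Q2R_IZ. rewrite <- (Qopp_involutive (inject_Z C)), H.
    rewrite Q2R_opp, Q2R_0. ring.
  - simpl. rewrite horner_xn, Q2R_opp, Q2R_IZ, <- Hz.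
    replace n with (S (n - 1)) at 1 by lia. simpl. ring.
Qed.

Lemma rat_pow_alg (p q G : R) (c : Z) (m : nat) (w : Q) : p = Q2R w -> 1 < p -> 1 < q ->
  1 < IZR c -> G = ln (IZR c) -> p * ln q = INR m * G -> algc q.
Proof.
  intros Hw Hp Hq Hc HG R2.
  destruct w as [n d]. unfold Q2R in Hw; simpl in Hw.
  assert (Hd : 0 < IZR (Z.pos d)) by (apply IZR_lt; lia).
  assert (Hn : 0 < IZR n).
  { assert (0 < IZR n * / IZR (Z.pos d)) by lra.
    apply (Rmult_lt_reg_r (/ IZR (Z.pos d))). apply Rinv_0_lt_compat; auto. lra. }
  apply lt_IZR in Hn.
  assert (En : INR (Z.to_nat n) = IZR n) by (rewrite INR_IZR_INZ, Z2Nat.id; auto; lia).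
  assert (Ed : INR (Pos.to_nat d) = IZR (Z.pos d)) by (rewrite INR_IZR_INZ, positive_nat_Z; auto).
  apply (alg_pow q (Z.to_nat n) (c ^ Z.of_nat (m * Pos.to_nat d))).
  - lia.
  - rewrite <- pow_IZR. apply ln_inv. apply pow_lt; lra. apply pow_lt; lra.
    rewrite !ln_pow by lra. rewrite En, mult_INR, Ed, <- HG.
    replace (IZR n) with (p * IZR (Z.pos d)) by (rewrite Hw; field; lra).
    replace (p * IZR (Z.pos d) * ln q) with (IZR (Z.pos d) * (p * ln q)) by ring.
    rewrite R2. ring.
  - rewrite <- pow_IZR. apply pow_nonzero. lra.
Qed.

Lemma trans_core (p q G : R) (c : Z) (k m : nat) : Schanuel -> 1 < p -> 1 < q -> 1 < IZR c ->
  G = ln (IZR c) -> q * ln p = INR k * G -> p * ln q = INR m * G ->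
  (0 < k)%nat -> (0 < m)%nat -> Q_algebraic p ->
  exists w1 w2 : Q, p = Q2R w1 /\ q = Q2R w2.
Proof.
  intros HS Hp Hq Hc HG R1 R2 Hk0 Hm0 Halg.
  set (kq := inject_Z (Z.of_nat k)). set (mq := inject_Z (Z.of_nat m)).
  assert (Ek : Q2R kq = INR k) by (unfold kq; rewrite Q2R_IZ, INR_IZR_INZ; auto).
  assert (Em : Q2R mq = INR m) by (unfold mq; rewrite Q2R_IZ, INR_IZR_INZ; auto).
  rewrite <- Ek in R1. rewrite <- Em in R2.
  assert (Hk' : Q2R kq <> 0) by (rewrite Ek; apply not_0_INR; lia).
  assert (Hm' : Q2R mq <> 0) by (rewrite Em; apply not_0_INR; lia).
  assert (Hk : ~ (kq == 0)%Q) by (intro E; apply Hk'; rewrite (Qeq_eqR _ _ E); apply Q2R_0).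
  assert (Hm : ~ (mq == 0)%Q) by (intro E; apply Hm'; rewrite (Qeq_eqR _ _ E); apply Q2R_0).
  assert (HGp : 0 < G) by (rewrite HG; rewrite <- ln_1; apply ln_increasing; lra).
  assert (HP : 0 < ln p) by (rewrite <- ln_1; apply ln_increasing; lra).
  assert (HQ : 0 < ln q) by (rewrite <- ln_1; apply ln_increasing; lra).
  assert (Ep : exp (ln p) = p) by (apply exp_ln; lra).
  assert (Eq : exp (ln q) = q) by (apply exp_ln; lra).
  assert (Ec : exp G = IZR c) by (rewrite HG; apply exp_ln; lra).
  assert (Hap : algc p) by (apply L0; auto; lra).
  assert (Hap' : algc (exp (ln p))) by (rewrite Ep; auto).
  destruct Hap as [c0 [cs [Hc0 Hh]]].
  assert (HA : (exists w, p = Q2R w) \/ (exists w, q = Q2R w)).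
  { destruct (classic (indep3 (ln p) (ln q) G)) as [HI3|HI3].
    { exfalso. apply (S3 (ln p) (ln q) G c kq mq); auto; try lra.
      rewrite Eq; auto. rewrite Ep; auto. }
    unfold indep3 in HI3.
    apply not_all_ex_not in HI3; destruct HI3 as [u HI3].
    apply not_all_ex_not in HI3; destruct HI3 as [v HI3].
    apply not_all_ex_not in HI3; destruct HI3 as [w HI3].
    apply imply_to_and in HI3; destruct HI3 as [H1 H2].
    destruct (Qeq_dec v 0) as [Zv|Zv].
    { right. apply (dep2_rat (ln p) G q kq); auto; try lra.
      intro HI2. apply H2. rewrite (Qeq_eqR _ _ Zv), Q2R_0 in H1.
      destruct (HI2 u w) as [A B]. lra. auto. }
    pose proof (Q2R_nz _ Zv) as Zv'.
    destruct (Qeq_dec u 0) as [Zu|Zu].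
    { left. apply (dep2_rat (ln q) G p mq); auto; try lra.
      intro HI2. apply Zv. rewrite (Qeq_eqR _ _ Zu), Q2R_0 in H1.
      destruct (HI2 v w) as [A B]. lra. auto. }
    pose proof (Q2R_nz _ Zu) as Zu'.
    right. apply (dep2_rat (ln p) G q kq); auto; try lra.
    intro HI2.
    apply (S2 (ln p) G c (hex (c0 :: cs) (Ml (K (- (v * mq))) (V 1)) (Pl (Ml (K u) (V 0)) (Ml (K w) (V 1))))
             (fun g => if Nat.eqb g 0 then 1 else 0)); auto; try lra.
    - intros g Hg. apply hex_vars in Hg. simpl in Hg. decompose [or] Hg; subst; auto; contradiction.
    - apply hex_wit; auto; simpl. ring. lra.
    - apply (hex_zero _ _ _ _ p); auto; simpl.
      + rewrite Q2R_opp, Q2R_mult.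
        replace (p * (Q2R u * ln p * 1 + Q2R w * G)) with (p * (Q2R u * ln p + Q2R w * G)) by ring.
        replace (Q2R u * ln p + Q2R w * G) with (- (Q2R v * ln q)) by lra.
        replace (p * - (Q2R v * ln q)) with (- Q2R v * (p * ln q)) by ring. rewrite R2. ring.
      + replace (Q2R u * ln p + Q2R w * G) with (- (Q2R v * ln q)) by lra.
        apply Ropp_neq_0_compat. apply Rmult_integral_contrapositive; split; lra. }
  assert (Haq : algc q).
  { destruct HA as [[w Hw]|[w Hw]].
    - apply (rat_pow_alg p q G c m w); auto. rewrite <- Em; auto.
    - rewrite Hw. apply alg_rat. intro E. rewrite (Qeq_eqR _ _ E), Q2R_0 in Hw. lra. }
  destruct Haq as [d0 [ds [Hd0 Hdh]]].
  assert (Hqr : exists w, q = Q2R w).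
  { apply (dep2_rat (ln p) G q kq); auto; try lra. intro HI2.
    apply (S2 (ln p) G c (hex (d0 :: ds) (Ml (K kq) (V 1)) (V 0))
             (fun g => if Nat.eqb g 0 then 1 else 0)); auto; try lra.
    - intros g Hg. apply hex_vars in Hg. simpl in Hg. decompose [or] Hg; subst; auto; contradiction.
    - apply hex_wit; auto; simpl. ring. lra.
    - apply (hex_zero _ _ _ _ q); auto; simpl; lra. }
  assert (Hpr : exists w, p = Q2R w).
  { apply (dep2_rat (ln q) G p mq); auto; try lra. intro HI2.
    apply (S2 (ln q) G c (hex (c0 :: cs) (Ml (K mq) (V 1)) (V 0))
             (fun g => if Nat.eqb g 0 then 1 else 0)); auto; try lra.
    - rewrite Eq. exists d0, ds. auto.
    - intros g Hg. apply hex_vars in Hg. simpl in Hg. decompose [or] Hg; subst; auto; contradiction.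
    - apply hex_wit; auto; simpl. ring. lra.
    - apply (hex_zero _ _ _ _ p); auto; simpl; lra. }
  destruct Hpr as [w1 ?], Hqr as [w2 ?]. exists w1, w2; auto.
Qed.

Lemma coprime_pow d n : Z.gcd d n = 1%Z -> forall j, (d | n ^ Z.of_nat j)%Z -> (d | 1)%Z.
Proof.
  intros Hg j; induction j; intros H. simpl in H; auto.
  apply IHj. rewrite Nat2Z.inj_succ, Z.pow_succ_r in H by lia.
  apply (Z.gauss _ _ _ H Hg).
Qed.

Lemma ratpow_int (w1 w2 : Q) (N : Z) : 0 < Q2R w1 -> 0 < Q2R w2 ->
  Rpower (Q2R w1) (Q2R w2) = IZR N -> exists z, Q2R w1 = IZR z.
Proof.
  intros H1 H2 HR.
  destruct w1 as [n d], w2 as [a b]. unfold Q2R in *; simpl in *.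
  set (r := IZR n * / IZR (Z.pos d)) in *.
  assert (Hd : 0 < IZR (Z.pos d)) by (apply IZR_lt; lia).
  assert (Hb : 0 < IZR (Z.pos b)) by (apply IZR_lt; lia).
  assert (Ha : (0 < a)%Z).
  { apply lt_IZR. apply (Rmult_lt_reg_r (/ IZR (Z.pos b))). apply Rinv_0_lt_compat; auto. lra. }
  assert (Hn : (0 < n)%Z).
  { apply lt_IZR. apply (Rmult_lt_reg_r (/ IZR (Z.pos d))). apply Rinv_0_lt_compat; auto. unfold r in H1. lra. }
  set (a' := Z.to_nat a). set (b' := Pos.to_nat b).
  assert (Ea : INR a' = IZR a) by (unfold a'; rewrite INR_IZR_INZ, Z2Nat.id; auto; lia).
  assert (Eb : INR b' = IZR (Z.pos b)) by (unfold b'; rewrite INR_IZR_INZ, positive_nat_Z; auto).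
  assert (HN : 0 < IZR N) by (rewrite <- HR; unfold Rpower; apply exp_pos).
  assert (E1 : r ^ a' = IZR N ^ b').
  { rewrite <- (Rpower_pow a' r) by (unfold r; apply Rmult_lt_0_compat; auto; [apply IZR_lt; auto| apply Rinv_0_lt_compat; auto]).
    rewrite <- (Rpower_pow b') by auto. rewrite <- HR, Rpower_mult, Ea, Eb. f_equal. field. lra. }
  set (g := Z.gcd n (Z.pos d)).
  assert (Hg : (0 < g)%Z) by (unfold g; pose proof (Z.gcd_nonneg n (Z.pos d)); pose proof (Z.gcd_eq_0_r n (Z.pos d)); lia).
  set (n1 := (n / g)%Z). set (d1 := (Z.pos d / g)%Z).
  assert (En : n = (g * n1)%Z) by (unfold n1; apply Znumtheory.Zdivide_Zdiv_eq; auto; apply Z.gcd_divide_l).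
  assert (Ed : Z.pos d = (g * d1)%Z) by (unfold d1; apply Znumtheory.Zdivide_Zdiv_eq; auto; apply Z.gcd_divide_r).
  assert (Hcop : Z.gcd n1 d1 = 1%Z) by (unfold n1, d1; apply Z.gcd_div_gcd; unfold g; lia).
  assert (Hd1 : (0 < d1)%Z) by lia.
  assert (Er : r = IZR n1 / IZR d1).
  { unfold r. rewrite En, Ed, !mult_IZR. field. split; apply not_0_IZR; lia. }
  assert (Hz : (n1 ^ Z.of_nat a' = N ^ Z.of_nat b' * d1 ^ Z.of_nat a')%Z).
  { apply eq_IZR. rewrite mult_IZR, <- !pow_IZR, <- E1, Er. unfold Rdiv. rewrite Rpow_mult_distr, pow_inv.
    field. apply pow_nonzero. apply not_0_IZR; lia. }
  assert (Hdv : (d1 | 1)%Z).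
  { assert (Ha' : (1 <= a')%nat) by (unfold a'; lia).
    apply (coprime_pow d1 n1 ltac:(rewrite Z.gcd_comm; auto) a').
    rewrite Hz. apply Z.divide_mul_r.
    replace (Z.of_nat a') with (Z.succ (Z.of_nat a' - 1)) by lia.
    rewrite Z.pow_succ_r by lia. apply Z.divide_factor_l. }
  apply Z.divide_1_r in Hdv. exists n1. rewrite Er. destruct Hdv as [E|E]; [|lia]. rewrite E. field.
Qed.

Lemma cont_ln a : 0 < a -> continuity_pt ln a.
Proof. intros H. apply derivable_continuous_pt. exists (/ a). apply derivable_pt_lim_ln; auto. Qed.

Lemma ln2_pos : 0 < ln 2.
Proof. rewrite <- ln_1. apply ln_increasing; lra. Qed.

Lemma xy_exists : { x : R | 2 <= x <= 4 /\ exp (ln 2 / x) * ln x - 2 * ln 2 = 0 }.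
Proof.
  pose proof ln2_pos.
  apply (Ranalysis5.IVT_interv (fun x => exp (ln 2 / x) * ln x - 2 * ln 2) 2 4).
  - intros a Ha. reg. all: try lra. apply cont_ln; lra.
  - lra.
  - assert (exp (ln 2 / 2) < 2).
    { assert (exp (ln 2 / 2) < exp (ln 2)) by (apply exp_increasing; lra).
      rewrite exp_ln in H0 by lra. auto. }
    nra.
  - assert (exp (ln 2 / 4) > 1).
    { rewrite <- exp_0. apply exp_increasing. apply Rdiv_lt_0_compat; lra. }
    replace (ln 4) with (2 * ln 2). nra.
    replace 4 with (2 * 2) by ring. rewrite ln_mult by lra. ring.
Qed.

Lemma st_exists : { u : R | 2 <= u <= 17 /\
   u * exp (ln u / (u - 1)) * (ln u / (u - 1)) - ln 17 = 0 }.
Proof.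
  pose proof ln2_pos.
  apply (Ranalysis5.IVT_interv (fun u => u * exp (ln u / (u - 1)) * (ln u / (u - 1)) - ln 17) 2 17).
  - intros a Ha. reg. all: try lra. all: apply cont_ln; lra.
  - lra.
  - replace (2 - 1) with 1 by ring. rewrite Rdiv_1_r, exp_ln by lra.
    replace (2 * 2 * ln 2) with (ln 16).
    assert (ln 16 < ln 17) by (apply ln_increasing; lra). lra.
    replace 16 with (2 ^ 4) by (simpl; ring). rewrite ln_pow by lra. simpl; ring.
  - assert (0 < ln 17) by (rewrite <- ln_1; apply ln_increasing; lra).
    assert (exp (ln 17 / (17 - 1)) > 1).
    { assert (exp 0 < exp (ln 17 / (17 - 1))) by (apply exp_increasing; apply Rdiv_lt_0_compat; lra).
      rewrite exp_0 in H1. auto. }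
    replace (17 - 1) with 16 by ring. replace (17 - 1) with 16 in H1 by ring.
    set (e := exp (ln 17 / 16)) in *. 
    replace (17 * e * (ln 17 / 16) - ln 17) with (ln 17 * (17 * e / 16 - 1)) by field.
    apply Rmult_lt_0_compat; lra.
Qed.

Theorem mainTheorem2 :
  Schanuel ->
  exists x y s t : R,
    transcendental x /\ transcendental y /\ transcendental s /\ transcendental t /\
    0 < x /\ 0 < y /\ 0 < s /\ 0 < t /\
    s <> t /\
    Rpower x y <> Rpower y x /\
    Rpower s t = Rpower t s /\
    (exists a : Z, Rpower x y = IZR a) /\
    (exists b : Z, Rpower y x = IZR b) /\
    (exists c : Z, Rpower s t = IZR c).
Proof.
  intros HS.
  pose proof ln2_pos as L2.
  destruct xy_exists as [x [Hx Fx]].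
  destruct st_exists as [u [Hu Fu]].
  set (y := exp (ln 2 / x)) in *.
  set (a := ln u / (u - 1)) in *.
  set (s := exp a) in *. set (t := u * s).
  assert (Hy1 : 1 < y).
  { assert (exp 0 < y) by (apply exp_increasing; apply Rdiv_lt_0_compat; lra). rewrite exp_0 in H; auto. }
  assert (Hy2 : y < 2).
  { assert (y < exp (ln 2)) by (apply exp_increasing; apply (Rmult_lt_reg_r x); [lra|]; unfold Rdiv; rewrite Rmult_assoc, Rinv_l; nra).
    rewrite exp_ln in H; lra. }
  assert (Lny : ln y = ln 2 / x) by (unfold y; apply ln_exp).
  assert (XY1 : x * ln y = INR 1 * ln 2) by (rewrite Lny; simpl; field; lra).
  assert (XY2 : y * ln x = INR 2 * ln 2) by (simpl; lra).
  assert (Pxy : Rpower x y = 4).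
  { unfold Rpower. rewrite XY2. replace 4 with (2 * 2) by ring.
    rewrite <- (exp_ln 2) at 2 3 by lra. rewrite <- exp_plus. f_equal. simpl; ring. }
  assert (Pyx : Rpower y x = 2).
  { unfold Rpower. rewrite XY1. simpl. rewrite Rmult_1_l. apply exp_ln; lra. }
  assert (Hlnu : 0 < ln u) by (rewrite <- ln_1; apply ln_increasing; lra).
  assert (Ha : 0 < a) by (apply Rdiv_lt_0_compat; lra).
  assert (Ha1 : a < 1).
  { assert (1 + ln u < exp (ln u)) by (apply exp_ineq1; lra). rewrite exp_ln in H by lra.
    unfold a. apply (Rmult_lt_reg_r (u - 1)); [lra|]. unfold Rdiv. rewrite Rmult_assoc, Rinv_l; lra. }
  assert (Hs1 : 1 < s).
  { assert (exp 0 < s) by (apply exp_increasing; lra). rewrite exp_0 in H; auto. }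
  assert (Hs3 : s < 3).
  { assert (s < exp 1) by (apply exp_increasing; lra). pose proof exp_le_3. lra. }
  assert (Ht1 : 1 < t) by (unfold t; nra).
  assert (Lns : ln s = a) by (unfold s; apply ln_exp).
  assert (Lnt : ln t = ln u + a) by (unfold t; rewrite ln_mult, Lns; lra).
  assert (ST1 : t * ln s = INR 1 * ln 17) by (rewrite Lns; unfold t; simpl; lra).
  assert (ST2 : s * ln t = INR 1 * ln 17).
  { rewrite Lnt. assert (E : ln u = a * (u - 1)) by (unfold a; field; lra).
    rewrite E. simpl. replace (s * (a * (u - 1) + a)) with (u * s * a) by ring. lra. }
  assert (Pst : Rpower s t = 17).
  { unfold Rpower. rewrite ST1. simpl. rewrite Rmult_1_l. apply exp_ln; lra. }
  assert (Pts : Rpower t s = 17).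
  { unfold Rpower. rewrite ST2. simpl. rewrite Rmult_1_l. apply exp_ln; lra. }
  assert (RXY : forall w1 w2 : Q, x = Q2R w1 -> y = Q2R w2 -> False).
  { intros w1 w2 E1 E2. destruct (ratpow_int w2 w1 2) as [z Hz]; try lra.
    rewrite <- E1, <- E2; auto.
    rewrite <- E2 in Hz. rewrite Hz in Hy1, Hy2. apply lt_IZR in Hy1. apply lt_IZR in Hy2. lia. }
  assert (RST : forall w1 w2 : Q, s = Q2R w1 -> t = Q2R w2 -> False).
  { intros w1 w2 E1 E2. destruct (ratpow_int w1 w2 17) as [z Hz]; try lra.
    rewrite <- E1, <- E2; auto.
    destruct (ratpow_int w2 w1 17) as [z' Hz']; try lra.
    rewrite <- E1, <- E2; auto.
    rewrite <- E1 in Hz. rewrite <- E2 in Hz'.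
    assert (z = 2%Z).
    { rewrite Hz in Hs1, Hs3. apply lt_IZR in Hs1. apply lt_IZR in Hs3. lia. }
    subst z. rewrite Hz, Hz' in Pts.
    replace (IZR 2) with (INR 2) in Pts by (simpl; lra).
    rewrite Rpower_pow in Pts. rewrite pow_IZR in Pts. apply eq_IZR in Pts.
    rewrite Hz' in Ht1. apply lt_IZR in Ht1. change (Z.of_nat 2) with 2%Z in Pts. rewrite Z.pow_2_r in Pts. destruct (Z_le_gt_dec z' 4); nia.
    rewrite <- Hz'; lra. }
  exists x, y, s, t.
  split; [|split; [|split; [|split]]].
  - intro HA. destruct (trans_core x y (ln 2) 2 2 1 HS) as [w1 [w2 [E1 E2]]]; auto; try lra; try lia.
    eapply RXY; eauto.
  - intro HA. destruct (trans_core y x (ln 2) 2 1 2 HS) as [w1 [w2 [E1 E2]]]; auto; try lra; try lia.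
    eapply RXY; eauto.
  - intro HA. destruct (trans_core s t (ln 17) 17 1 1 HS) as [w1 [w2 [E1 E2]]]; auto; try lra; try lia.
    eapply RST; eauto.
  - intro HA. destruct (trans_core t s (ln 17) 17 1 1 HS) as [w1 [w2 [E1 E2]]]; auto; try lra; try lia.
    eapply RST; eauto.
  - rewrite Pxy, Pyx, Pst, Pts. repeat split; try lra.
    + unfold t. nra.
    + exists 4%Z. reflexivity.
    + exists 2%Z. reflexivity.
    + exists 17%Z. reflexivity.
Qed.
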